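(* Let $\mathcal{F}$ be a hypothesis class of functions $\mathcal{X}\to\{\pm1\}$ with finite VC dimension $d$, and $\mathcal{P}$ an unknown distribution on $\mathcal{X}\times\{\pm1\}$. Consider a run of Active-ILESS with confidence $\delta$ and suppose the event $\mathcal{K}$ occurred. Then every true risk minimizer $f^*$ of the original distribution $\mathcal{P}$ belongs to $G_t$ for all $t$. Consequently $R_{\mathcal{P}(G_t)}(f^* )\le R(f^* )$ for all $t$.
   Context: $R(f)=R_{\mathcal{P}}(f)=\Pr_{\mathcal{P}}[f(X)\ne Y]$; $\hat R(f,S)$ is the fraction of examples of $S$ misclassified by $f$; $f^*$ is any minimizer of $R$ over $\mathcal{F}$. Slacks: for $n>0$, $\delta'\in(0,1)$, $A=4d\ln\frac{16ne}{d\delta'}$, $\hat\sigma_{R-\hat R}(n,\delta',d,\hat r)=\frac{A}{n}+\sqrt{\frac{A}{n}\hat r}$, $\bar\sigma_{R-\hat R}(n,\delta',d,r)=\sqrt{\frac{A}{n}r}$, $\bar\sigma_{\hat R-R}(n,\delta',d,r)=\frac{A}{n}+\sqrt{\frac{A}{n}r}$, $\hat\sigma_{\hat R-R}(n,\delta',d,\hat r)=\sqrt{\frac{A}{n}\hat r}$, $\sigma_{R-\hat R}=\min\{\hat\sigma_{R-\hat R}(\cdot,\hat r),\bar\sigma_{R-\hat R}(\cdot,r)\}$, $\sigma_{\hat R-R}=\min\{\bar\sigma_{\hat R-R}(\cdot,r),\hat\sigma_{\hat R-R}(\cdot,\hat r)\}$. $AGR(G)=\{x:\text{all }f\in G\text{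 agree on }x\}$. Active-ILESS (inputs: $\epsilon$ and/or budget $m$, confidence $\delta$, $\mathcal{F}$, $d$, i.i.d. stream $x_1,x_2,\dots$ from $\mathcal{P}$): initialize $\hat S=\emptyset$, $G_0=\mathcal{F}$, $t=1$; for each $x_t$: if $x_t\in AGR(G_{t-1})$ do not request its label and set $y_t=f(x_t)$ for any $f\in G_{t-1}$, otherwise request the true label $y_t$; add $(x_t,y_t)$ to $\hat S$; let $\hat f$ be an ERM on $\hat S$; if $\log_2t\in\mathbb{N}$: set $\sigma_{\rm Active}=\hat\sigma_{R-\hat R}(\tfrac t2,\tfrac\delta{2t},d,\hat R(\hat f,\hat S))+\bar\sigma_{\hat R-R}\big(\tfrac t2,\tfrac\delta{2t},d,\hat R(\hat f,\hat S)+\hat\sigma_{R-\hat R}(\tfrac t2,\tfrac\delta{2t},d,\hat R(\hat f,\hat S))\big)$, terminate returning $\hat f$ if $\epsilon$ was given and $\sigma_{\rm Active}<\epsilon$, set $G_t=\{f:\hat R(f,\hat S)\le\hat R(\hat f,\hat S)+\sigma_{\rm Active}\}$ and reset $\hat S=\emptyset$; otherwise $G_t=G_{t-1}$; if $m$ was given and $t=m$ terminate returning $\hat f$; increment $t$. For $G\subseteq\mathcal{F}$, $\mathcal{P}(G)$ is the distribution of $(X,Y')$ with $(X,Y)\sim\mathcal{P}$, $Y'$ = common value of $G$ at $X$ if $X\in AGR(G)$ and $Y'=Y$ otherwise; $R_{\mathcal{P}(G)}(f)=\Pr[f(X)\ne Y']$. Event $\mathcal{K}$: for every $t=2^i$ reached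 and every $f\in\mathcal{F}$, with $\hat R(f)=\hat R(f,\hat S)$ for $\hat S$ at iteration $t$ before reset, $R_{\mathcal{P}(G_{t-1})}(f)\le\hat R(f)+\sigma_{R-\hat R}(\tfrac t2,\tfrac\delta{2t},d,R_{\mathcal{P}(G_{t-1})}(f),\hat R(f))$ and $\hat R(f)\le R_{\mathcal{P}(G_{t-1})}(f)+\sigma_{\hat R-R}(\tfrac t2,\tfrac\delta{2t},d,R_{\mathcal{P}(G_{t-1})}(f),\hat R(f))$. *)

(* Defs.v *)
From HB Require Import structures.
From mathcomp Require Import all_boot all_order all_algebra.
From mathcomp Require Import all_classical all_reals all_analysis.
Set Implicit Arguments. Unset Strict Implicit. Unset Printing Implicit Defensive.
Import Order.TTheory GRing.Theory Num.Theory.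
Local Open Scope classical_set_scope.
Local Open Scope ring_scope.

Definition shatters_size (X : Type) (F : set (X -> bool)) (n : nat) : Prop :=
  exists s : 'I_n -> X, injective s /\
    forall lab : 'I_n -> bool, exists f, F f /\ forall i, f (s i) = lab i.

Definition VC_dim (X : Type) (F : set (X -> bool)) (d : nat) : Prop :=
  shatters_size F d /\ ~ shatters_size F d.+1.

(* labels +-1 are represented by bool *)
Definition risk (d0 : measure_display) (X : measurableType d0) (R : realType)
  (P : probability (X * bool)%type R) (f : X -> bool) : R :=
  fine (P [set z | f z.1 != z.2]).

Definition AGR (X : Type) (G : set (X -> bool)) : set X :=
  [set x | forall f g, G f -> G g -> f x = g x].

(* R_{P(G)}(f) = Pr[f(X) <> Y'] where Y' is the common value of G at X
   if X \in AGR(G), and Y' = Y otherwise. *)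
Definition riskPG (d0 : measure_display) (X : measurableType d0) (R : realType)
  (P : probability (X * bool)%type R) (G : set (X -> bool)) (f : X -> bool) : R :=
  fine (P [set z | (AGR G z.1 /\ exists g, G g /\ f z.1 != g z.1)
                   \/ (~ AGR G z.1 /\ f z.1 != z.2)]).

Definition emp_risk (X : Type) (R : realType) (f : X -> bool) (S : seq (X * bool)) : R :=
  (count (fun z => f z.1 != z.2) S)%:R / (size S)%:R.

Section Slacks.
Variable R : realType.
Definition Aterm (n delta' : R) (d : nat) : R :=
  4 * d%:R * ln (16 * n * expR 1 / (d%:R * delta')).
Definition sig_hat_RmR (n delta' : R) (d : nat) (rh : R) : R :=
  Aterm n delta' d / n + Num.sqrt (Aterm n delta' d / n * rh).
Definition sig_bar_RmR (n delta' : R) (d : nat) (r : R) : R :=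
  Num.sqrt (Aterm n delta' d / n * r).
Definition sig_bar_hRmR (n delta' : R) (d : nat) (r : R) : R :=
  Aterm n delta' d / n + Num.sqrt (Aterm n delta' d / n * r).
Definition sig_hat_hRmR (n delta' : R) (d : nat) (rh : R) : R :=
  Num.sqrt (Aterm n delta' d / n * rh).
Definition sig_RmR (n delta' : R) (d : nat) (r rh : R) : R :=
  Num.min (sig_hat_RmR n delta' d rh) (sig_bar_RmR n delta' d r).
Definition sig_hRmR (n delta' : R) (d : nat) (r rh : R) : R :=
  Num.min (sig_bar_hRmR n delta' d r) (sig_hat_hRmR n delta' d rh).
End Slacks.

Definition pow2b (t : nat) : bool := (0 < t)%N && (2 ^ trunc_log 2 t == t)%N.

(* the sample \hat S at the end of iteration t (before a possible reset at t),
   given the stream x and the labels lab assigned by the algorithm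
   (pseudo-labels on the agreement region, true labels otherwise);
   \hat S is reset after every iteration t with log_2 t in N. *)
Fixpoint Shat (X : Type) (x : nat -> X) (lab : nat -> bool) (t : nat) : seq (X * bool) :=
  match t with
  | 0 => [::]
  | t'.+1 => rcons (if pow2b t' then [::] else Shat x lab t') (x t'.+1, lab t'.+1)
  end.

Definition sigma_active (R : realType) (d : nat) (delta : R) (t : nat) (rh : R) : R :=
  let n := t%:R / 2 in let dl := delta / (2 * t%:R) in
  sig_hat_RmR n dl d rh + sig_bar_hRmR n dl d (rh + sig_hat_RmR n dl d rh).

(* (x, y, lab, fhat, G) is a run of Active-ILESS on F with parameters d, delta,
   for iterations t = 1 .. T (G t = G_t, fhat t = ERM computed at iteration t). *)
Definition ILESS_run (X : Type) (R : realType) (F : set (X -> bool)) (d : nat) (delta : R)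
  (x : nat -> X) (y : nat -> bool) (lab : nat -> bool) (fhat : nat -> X -> bool)
  (G : nat -> set (X -> bool)) (T : nat) : Prop :=
  G 0 = F /\
  forall t, (1 <= t <= T)%N ->
    (AGR (G t.-1) (x t) -> exists g, G t.-1 g /\ lab t = g (x t)) /\
    (~ AGR (G t.-1) (x t) -> lab t = y t) /\
    (F (fhat t) /\ forall f, F f ->
       emp_risk R (fhat t) (Shat x lab t) <= emp_risk R f (Shat x lab t)) /\
    G t = (if pow2b t then
             [set f | F f /\ emp_risk R f (Shat x lab t) <=
                emp_risk R (fhat t) (Shat x lab t)
                + sigma_active d delta t (emp_risk R (fhat t) (Shat x lab t))]
           else G t.-1).

Definition event_K (d0 : measure_display) (X : measurableType d0) (R : realType)
  (P : probability (X * bool)%type R) (F : set (X -> bool)) (d : nat) (delta : R)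
  (x : nat -> X) (lab : nat -> bool) (G : nat -> set (X -> bool)) (T : nat) : Prop :=
  forall t, (1 <= t <= T)%N -> pow2b t -> forall f, F f ->
    let n := t%:R / 2 in let dl := delta / (2 * t%:R) in
    let r := riskPG P (G t.-1) f in let rh := emp_risk R f (Shat x lab t) in
    r <= rh + sig_RmR n dl d r rh /\ rh <= r + sig_hRmR n dl d r rh.

(* Main.v *)
Require Import Defs.
From HB Require Import structures.
From mathcomp Require Import all_boot all_order all_algebra.
From mathcomp Require Import all_classical all_reals all_analysis.
From mathcomp Require Import lra.
Import Order.TTheory GRing.Theory Num.Theory.
Local Open Scope classical_set_scope.
Local Open Scope ring_scope.

Section H.
Context (d0 : measure_display) (T : measurableType d0) (R : realType)
  (P : probability T R).

Lemma pm_fin A : measurable A -> P A \is a fin_num.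
Proof. by move=> mA; apply: fin_num_measure. Qed.

Lemma pm_le A B : measurable A -> measurable B -> A `<=` B -> fine (P A) <= fine (P B).
Proof.
move=> mA mB AB; apply: fine_le; rewrite ?pm_fin //.
by apply: le_measure => //; rewrite inE.
Qed.

Lemma pm_add A B : measurable A -> measurable B -> A `&` B = set0 ->
  fine (P (A `|` B)) = fine (P A) + fine (P B).
Proof.
move=> mA mB AB; rewrite measureU //; rewrite fineD // ?pm_fin //.
Qed.

Lemma pm_sub A B : measurable A -> measurable B ->
  fine (P (A `|` B)) <= fine (P A) + fine (P B).
Proof.
move=> mA mB; rewrite -fineD ?pm_fin //; apply: fine_le; rewrite ?pm_fin //.
  by apply: measurableU.
  by rewrite fin_numD !pm_fin.
exact: measureU2.
Qed.

Lemma meas_neq (g h : T -> bool) : measurable_fun setT g -> measurable_fun setT h ->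
  measurable [set z | g z != h z].
Proof.
move=> mg mh.
have pre : forall (k : T -> bool) b, measurable_fun setT k -> measurable (k @^-1` [set b]).
  by move=> k b mk; rewrite -[_ @^-1` _]setTI; apply: mk.
have -> : [set z | g z != h z] = (g @^-1` [set true] `&` h @^-1` [set false]) `|`
   (g @^-1` [set false] `&` h @^-1` [set true]).
  apply/seteqP; split => z /=.
    by case: (g z); case: (h z) => //= _; [left|right].
  by case=> -[-> ->].
by apply: measurableU; apply: measurableI; apply: pre.
Qed.
End H.

Section M.
Context (d0 : measure_display) (X : measurableType d0) (R : realType)
  (P : probability (X * bool)%type R).

Lemma set_eq (G : set (X -> bool)) fs f : G fs ->
  [set z | (AGR G z.1 /\ exists g, G g /\ f z.1 != g z.1)
                   \/ (~ AGR G z.1 /\ f z.1 != z.2)] =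
  ([set z | AGR G z.1] `&` [set z | f z.1 != fs z.1]) `|`
  (~` [set z | AGR G z.1] `&` [set z | f z.1 != z.2]).
Proof.
move=> Gfs; apply/seteqP; split => z /=.
  case=> [[Az [g [Gg fg]]]|[nA fy]]; last by right.
  by left; split => //; rewrite (Az fs g Gfs Gg).
case=> [[Az ffs]|[nA fy]]; last by right.
by left; split => //; exists fs.
Qed.

Lemma mA (G : set (X -> bool)) : measurable (AGR G) ->
  measurable [set z : X * bool | AGR G z.1].
Proof.
move=> mG; have := @measurable_fst _ _ X bool measurableT _ mG.
by rewrite setTI.
Qed.

Lemma mfst (f : X -> bool) : measurable_fun setT f ->
  measurable_fun setT (fun z : X * bool => f z.1).
Proof. by move=> mf; apply: measurableT_comp => //; apply: measurable_fst. Qed.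

Lemma rPG_le (G : set (X -> bool)) fs : measurable (AGR G) -> G fs ->
  measurable_fun setT fs -> riskPG P G fs <= risk P fs.
Proof.
move=> mG Gfs mfs; rewrite /riskPG /risk (set_eq _ fs fs Gfs).
have mE : measurable [set z : X * bool | fs z.1 != z.2].
  by apply: meas_neq; [apply: mfst|apply: measurable_snd].
apply: pm_le.
- apply: measurableU; apply: measurableI; try apply: meas_neq; try apply: mfst => //.
  + exact: mA.
  + apply: measurableC; exact: mA.
  + exact: measurable_snd.
- exact: mE.
- by move=> z /= [[_ /eqP]|[]].
Qed.

Lemma rPG_min (G : set (X -> bool)) fs f : measurable (AGR G) -> G fs ->
  measurable_fun setT fs -> measurable_fun setT f ->
  risk P fs <= risk P f -> riskPG P G fs <= riskPG P G f.
Proof.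
move=> mG Gfs mfs mf hr; rewrite /riskPG /risk in hr *.
rewrite (set_eq _ _ fs Gfs) (set_eq _ _ f Gfs).
set A := [set z : X * bool | AGR G z.1].
set Es := [set z : X * bool | fs z.1 != z.2].
set Ef := [set z : X * bool | f z.1 != z.2].
set D := [set z : X * bool | f z.1 != fs z.1].
have mA' : measurable A by exact: mA.
have mAc : measurable (~` A) by exact: measurableC.
have mEs : measurable Es by apply: meas_neq; [apply: mfst|apply: measurable_snd].
have mEf : measurable Ef by apply: meas_neq; [apply: mfst|apply: measurable_snd].
have mD : measurable D by apply: meas_neq; apply: mfst.
have e1 : fine (P Es) = fine (P (A `&` Es)) + fine (P (~` A `&` Es)).
  rewrite -pm_add; try by apply: measurableI.
    by rewrite -setIUl setUv setTI.
  by rewrite setIACA setICr set0I.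
have e2 : fine (P Ef) = fine (P (A `&` Ef)) + fine (P (~` A `&` Ef)).
  rewrite -pm_add; try by apply: measurableI.
    by rewrite -setIUl setUv setTI.
  by rewrite setIACA setICr set0I.
have e3 : fine (P (A `&` Ef)) <= fine (P (A `&` Es)) + fine (P (A `&` D)).
  apply: (le_trans (y := fine (P ((A `&` Es) `|` (A `&` D))))); last by apply: pm_sub; apply: measurableI.
  apply: pm_le; try by [apply: measurableI|apply: measurableU; apply: measurableI].
  move=> z [Az fz]; rewrite /Es /D /=.
  case: (boolP (fs z.1 != z.2)) => h; first by left.
  right; split => //; move: h fz; rewrite negbK => /eqP ->.
  by [].
have e4 : fine (P ((A `&` D) `|` (~` A `&` Ef))) =
    fine (P (A `&` D)) + fine (P (~` A `&` Ef)).
  rewrite pm_add //; try by apply: measurableI.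
  by rewrite setIACA setICr set0I.
have e5 : ((A `&` [set z | fs z.1 != fs z.1]) `|` (~` A `&` Es)) = ~` A `&` Es.
  apply/seteqP; split => z /=; last by right.
  by case=> [[_ /eqP]|] //.
rewrite e5 e4; lra.
Qed.
End M.

Lemma sbar_mono (R : realType) (n dl : R) d a b : 0 <= a -> a <= b ->
  sig_bar_hRmR n dl d a <= sig_bar_hRmR n dl d b.
Proof.
move=> a0 ab; rewrite /sig_bar_hRmR lerD2l.
case: (leP 0 (Aterm n dl d / n)) => hc.
  by apply: ler_wsqrtr; apply: ler_wpM2l.
rewrite ler0_sqrtr ?sqrtr_ge0 //; nra.
Qed.

Lemma minl (R : realType) (a b : R) : Num.min a b <= a.
Proof. by rewrite ge_min lexx. Qed.
Lemma minr (R : realType) (a b : R) : Num.min a b <= b.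
Proof. by rewrite ge_min lexx orbT. Qed.

Theorem lemma11 (d0 : measure_display) (X : measurableType d0) (R : realType)
  (P : probability (X * bool)%type R) (F : set (X -> bool)) (d : nat) (delta : R)
  (x : nat -> X) (y : nat -> bool) (lab : nat -> bool) (fhat : nat -> X -> bool)
  (G : nat -> set (X -> bool)) (T : nat) :
  VC_dim F d ->
  (forall f, F f -> measurable_fun setT f) ->
  (forall t, (t <= T)%N -> measurable (AGR (G t))) ->
  0 < delta < 1 ->
  ILESS_run F d delta x y lab fhat G T ->
  event_K P F d delta x lab G T ->
  forall fstar, F fstar -> (forall f, F f -> risk P fstar <= risk P f) ->
  forall t, (t <= T)%N -> G t fstar /\ riskPG P (G t) fstar <= risk P fstar.
Proof.
move=> _ mF mAG _ [G0 run] K fs Fs fmin.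
have Gin : forall t, (t <= T)%N -> G t fs.
  elim=> [|t IH] Ht; first by rewrite G0.
  have hT : (1 <= t.+1 <= T)%N by rewrite Ht.
  have [_ [_ [[Ffh erm] Geq]]] := run t.+1 hT.
  rewrite Geq; case: ifP => p2; last by apply: IH; apply: ltnW.
  have IHt := IH (ltnW Ht).
  move: (K t.+1 hT p2 fs Fs) => /= [Ks1 Ks2].
  move: (K t.+1 hT p2 (fhat t.+1) Ffh) => /= [Kh1 Kh2].
  have rmin : riskPG P (G t) fs <= riskPG P (G t) (fhat t.+1).
    by apply: rPG_min => //; [apply: mAG; apply: ltnW|apply: mF|apply: mF|apply: fmin].
  have r0 : 0 <= riskPG P (G t) fs by apply: fine_ge0; apply: measure_ge0.
  split => //; rewrite /sigma_active /=.
  set n := (t.+1%:R / 2 : R) in Ks1 Ks2 Kh1 Kh2 *.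
  set dl := delta / (2 * t.+1%:R) in Ks1 Ks2 Kh1 Kh2 *.
  set rh := emp_risk R (fhat t.+1) (Shat x lab t.+1) in Ks1 Ks2 Kh1 Kh2 *.
  set rhs := emp_risk R fs (Shat x lab t.+1) in Ks1 Ks2 Kh1 Kh2 *.
  set rs := riskPG P (G t) fs in Ks1 Ks2 rmin r0 *.
  set rf := riskPG P (G t) (fhat t.+1) in Kh1 Kh2 rmin *.
  have h1 := @minl _ (sig_bar_hRmR n dl d rs) (sig_hat_hRmR n dl d rhs).
  have h2 := @minl _ (sig_hat_RmR n dl d rh) (sig_bar_RmR n dl d rf).
  rewrite /sig_hRmR in Ks2; rewrite /sig_RmR in Kh1.
  have h3 : rs <= rh + sig_hat_RmR n dl d rh by lra.
  have h4 := @sbar_mono _ n dl d _ _ r0 h3.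
  lra.
move=> t Ht; split; first exact: Gin.
apply: rPG_le; [exact: mAG|exact: Gin|exact: mF].
Qed.
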